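(* Let $V$ be a finite-dimensional real vector space, regarded as an additive group, and let $S,T\subset V$. If the asymptotic cones satisfy $S\infty\cap T\infty=\{0\}$, then $S\pitchfork T$ in $V$.
   Context: The asymptotic cone $S\infty$ of a subset $S\subset V$ is the closed cone consisting of all limits $\lim_{n\to\infty}\varepsilon_n x_n$ with $x_n\in S$ and $\varepsilon_n>0$, $\varepsilon_n\to 0$. For subsets $S,T$ of the additive group $V$, $S\pitchfork T$ means that for every compact subset $C\subset V$ the set $S\cap (C+T+C)$ is relatively compact, where $C+T+C=\{a+x+b:a,b\in C,\ x\in T\}$. *)

(* Defs.v *)
(* V = 'rV[R]_n (finite-dimensional real vector space, R : realType). *)
From HB Require Import structures.
From mathcomp Require Import all_boot all_order all_algebra.
From mathcomp Require Import all_classical all_reals all_analysis.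
Set Implicit Arguments. Unset Strict Implicit. Unset Printing Implicit Defensive.
Import Order.TTheory GRing.Theory Num.Theory.
Import numFieldNormedType.Exports.
Local Open Scope classical_set_scope.
Local Open Scope ring_scope.

Definition relatively_compact {T : topologicalType} (A : set T) : Prop :=
  compact (closure A).

Definition asymptotic_cone {R : realType} {n : nat} (S : set 'rV[R]_n) : set 'rV[R]_n :=
  [set y | exists (eps : nat -> R) (x : nat -> 'rV[R]_n),
      (forall k, S (x k)) /\ (forall k, 0 < eps k) /\
      eps @ \oo --> (0 : R) /\ (fun k => eps k *: x k) @ \oo --> y].

Definition sum3 {R : realType} {n : nat} (C T : set 'rV[R]_n) : set 'rV[R]_n :=
  [set z | exists a x b, C a /\ T x /\ C b /\ z = a + x + b].

Definition pitchfork {R : realType} {n : nat} (S T : set 'rV[R]_n) : Prop :=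
  forall C : set 'rV[R]_n, compact C -> relatively_compact (S `&` sum3 C T).

(* Main.v *)
Require Import Defs.
From mathcomp Require Import all_boot all_order all_algebra.
From mathcomp Require Import all_classical all_reals all_analysis.
From mathcomp Require Import lra.
Set Implicit Arguments. Unset Strict Implicit. Unset Printing Implicit Defensive.
Import Order.TTheory GRing.Theory Num.Theory.
Import numFieldNormedType.Exports.
Local Open Scope classical_set_scope.
Local Open Scope ring_scope.

Lemma ball_compact (R : realType) n (M : R) :
  compact (closed_ball_ Num.norm (0:'rV[R]_n) M).
Proof.
apply: bounded_closed_compact; last exact: closed_closed_ball_.
exists M; split; first by rewrite num_real.
move=> M' ltM' x; rewrite /closed_ball_ /= sub0r normrN => /le_trans; apply.
exact: ltW.
Qed.

Lemma cvg_harm (R : realType) (V : normedModType R) (u : nat -> V) y (c : R) :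
  (forall m, `|y - u m| <= c / m.+1%:R) -> u @ \oo --> y.
Proof.
move=> H; apply/cvgrPdist_le => e e0.
near=> m. apply: (le_trans (H m)).
have hm : c / e <= m%:R by near: m; exact: nbhs_infty_ger.
rewrite ler_pdivrMr // -ler_pdivrMl //.
rewrite mulrC; apply: (le_trans hm); by rewrite ler_nat.
Unshelve. all: end_near. Qed.

Lemma alg_id (V : zmodType) (y P Q W : V) : y - Q = y - (P + Q + W) + (P + W).
Proof. by rewrite [P + Q]addrC -(addrA Q) opprD [y + (_ + _)]addrA addrNK. Qed.

Theorem lemma7p3 (R : realType) (n : nat) (S T : set 'rV[R]_n) :
  asymptotic_cone S `&` asymptotic_cone T = [set 0] -> pitchfork S T.
Proof.
move=> hST C cC.
set A := S `&` sum3 C T.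
have [MC hMC] : exists MC, forall x, C x -> `|x| <= MC.
  have [M [Mr HM]] := compact_bounded cC.
  exists (`|M| + 1); apply: HM.
  by rewrite (le_lt_trans (ler_norm M)) // ltrDl.
suff [M hM] : exists M, forall x, A x -> `|x| <= M.
  rewrite /relatively_compact; refine (subclosed_compact (@closed_closure _ _) (@ball_compact R n M) _).
  have := (closure_id (closed_ball_ Num.norm (0:'rV[R]_n) M)).1
    (@closed_closed_ball_ _ _ _ _) => ->.
  apply: closureS => x /hM; by rewrite /closed_ball_ /= sub0r normrN.
apply: contrapT => nb.
have unb : forall m : nat, exists s, A s /\ m.+1%:R < `|s|.
  move=> m; apply: contrapT => h; apply: nb; exists m.+1%:R => x Ax.
  rewrite leNgt; apply/negP => lt; apply: h; exists x; by split.
have /choice [s hs] := unb.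
pose u k := `|s k|^-1 *: s k.
have s0 : forall k, 0 < `|s k|.
  move=> k; apply: lt_trans (hs k).2; by rewrite ltr0n.
have nu : forall k, `|u k| = 1.
  move=> k; rewrite /u normrZ normfV normr_id mulVf //; exact: lt0r_neq0.
have PF : ProperFilter (u @ \oo) by apply: fmap_proper_filter.
have [|y [_ cly]] := @ball_compact R n 1 (u @ \oo) PF.
  exists 0%N => // k _; by rewrite /closed_ball_ /= sub0r normrN nu.
have /choice [kk hkk] : forall m, exists k, (m <= k)%N /\ `|y - u k| < m.+1%:R^-1.
  move=> m.
  have e0 : 0 < m.+1%:R^-1 :> R by rewrite invr_gt0 ltr0n.
  have FA : (u @ \oo) [set u k | k in [set k | (m <= k)%N]].
    by exists m => // k mk; exists k.
  have [v [[k km <-] hb]] := cly _ _ FA (nbhsx_ballx y _ e0).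
  exists k; split => //; by rewrite -ball_normE /ball_ /= in hb.
have ny0 : y != 0.
  apply/eqP => y0; have := (hkk 0%N).2.
  by rewrite y0 sub0r normrN nu /= invr1 ltxx.
pose eps m := `|s (kk m)|^-1.
have epos : forall m, 0 < eps m by move=> m; rewrite invr_gt0.
have heps : forall m, eps m <= m.+1%:R^-1.
  move=> m; rewrite lef_pV2 ?posrE ?ltr0n //.
  apply: ltW; apply: le_lt_trans (hs (kk m)).2; rewrite ler_nat ltnS.
  exact: (hkk m).1.
have ceps : eps @ \oo --> (0 : R).
  apply: (@cvg_harm _ _ _ _ 1) => m.
  by rewrite sub0r normrN gtr0_norm // mul1r.
have /choice [tt htt] : forall m, exists t, T t /\
    exists a b, C a /\ C b /\ s (kk m) = a + t + b.
  move=> m; have [_ [a [t [b [Ca [Tt [Cb e]]]]]]] := (hs (kk m)).1.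
  by exists t; split => //; exists a, b.
have hSy : asymptotic_cone S y.
  exists eps, (s \o kk); split; first by move=> k; exact: (hs (kk k)).1.1.
  split => //; split => //.
  apply: (@cvg_harm _ _ _ _ 1) => m; rewrite mul1r; exact/ltW/(hkk m).2.
have hTy : asymptotic_cone T y.
  exists eps, tt; split; first by move=> k; exact: (htt k).1.
  split => //; split => //.
  apply: (@cvg_harm _ _ _ _ (1 + 2 * MC)) => m.
  have [_ [a [b [Ca [Cb e]]]]] := htt m.
  rewrite (alg_id y (eps m *: a) (eps m *: tt m) (eps m *: b)) -!scalerDr -e.
  apply: le_trans (ler_normD _ _) _.
  rewrite mulrDl mul1r; apply: lerD; first exact/ltW/(hkk m).2.
  rewrite normrZ gtr0_norm // [eps m * _]mulrC.
  apply: ler_pM => //; first exact: ltW.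
  have := hMC a Ca; have := hMC b Cb; have := ler_normD a b; lra.
have : (asymptotic_cone S `&` asymptotic_cone T) y by split.
by rewrite hST => /= y0; move: ny0; rewrite y0 eqxx.
Qed.
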